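(* Let $\mathcal C=\mathcal C(I,A,(\rho_i)_{i\in I},(C^a)_{a\in A})$ be a connected Cartan scheme and $\mathcal R=\mathcal R(\mathcal C,(R^a)_{a\in A})$ a root system of type $\mathcal C$. Let $I'\subset I$, $I''=I\setminus I'$, and assume $I'\neq\emptyset\neq I''$. For $a\in A$ put $\hat R^a=(R^a\cap\sum_{i\in I'}\mathbb Z\alpha_i)\cup(R^a\cap\sum_{i\in I''}\mathbb Z\alpha_i)$. The following are equivalent: (1) there exists $a\in A$ with $c^a_{ij}=0$ for all $i\in I'$, $j\in I''$; (2) $c^a_{ij}=c^a_{ji}=0$ for all $a\in A$, $i\in I'$, $j\in I''$; (3) $\mathcal R(\mathcal C,(\hat R^a)_{a\in A})$ is a root system of type $\mathcal C$. If $\mathcal R$ is finite, then (1)–(3) are also equivalent to each of: (4) $\hat R^a=R^a$ for all $a\in A$; (5) $\mathcal R$ is the direct sum of its restrictions to $I'$ and $I''$, i.e. $R^a=(R^a\cap\sum_{i\in I'}\mathbb Z\alpha_i)\cup(R^a\cap\sum_{j\in I''}\mathbb Z\alpha_j)$ for all $a\in A$.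
   Context: Let $I$ be a nonempty finite set and $\{\alpha_i\mid i\in I\}$ the standard basis of $\mathbb Z^I$; $\mathbb N_0=\{0,1,2,\dots\}$. A generalized Cartan matrix is $C=(c_{ij})_{i,j\in I}\in\mathbb Z^{I\times I}$ with $c_{ii}=2$, $c_{jk}\le0$ for $j\ne k$, and $c_{ij}=0\Rightarrow c_{ji}=0$. A Cartan scheme $\mathcal C=\mathcal C(I,A,(\rho_i)_{i\in I},(C^a)_{a\in A})$ consists of a nonempty set $A$, maps $\rho_i:A\to A$ and generalized Cartan matrices $C^a=(c^a_{jk})_{j,k\in I}$ such that (C1) $\rho_i^2=\mathrm{id}$ and (C2) $c^a_{ij}=c^{\rho_i(a)}_{ij}$ for all $a\in A$, $i,j\in I$. It is connected if the group generated by the $\rho_i$ acts transitively on $A$. For $i\in I$, $a\in A$ let $\sigma_i^a\in\mathrm{Aut}(\mathbb Z^I)$, $\sigma_i^a(\alpha_j)=\alpha_j-c^a_{ij}\alpha_i$. A root system of type $\mathcal C$ is a family $\mathcal R=\mathcal R(\mathcal C,(R^a)_{a\in A})$ of subsets $R^a\subset\mathbb Z^I$ such that, writing $R^a_+=R^a\cap\mathbb N_0^I$ and $m^a_{i,j}=|R^a\cap(\mathbb N_0\alpha_i+\mathbb N_0\alpha_j)|$, for all $a\in A$, $i,j\in I$: (R1) $R^a=R^a_+\cup(-R^a_+)$; (R2) $R^a\cap\mathbb Z\alpha_i=\{\alpha_i,-\alpha_i\}$; (R3) $\sigma_i^a(R^a)=R^{\rho_i(a)}$; (R4) if $i\neq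 j$ and $m^a_{i,j}$ is finite then $(\rho_i\rho_j)^{m^a_{i,j}}(a)=a$. It is finite if every $R^a$ is finite. *)

(* Defs.v *)
From HB Require Import structures.
From mathcomp Require Import all_boot all_order all_algebra.
Set Implicit Arguments. Unset Strict Implicit. Unset Printing Implicit Defensive.
Import Order.TTheory GRing.Theory Num.Theory.
Local Open Scope ring_scope.

Notation zvec I := {ffun I -> int}.

Definition alpha (I : finType) (i : I) : zvec I := [ffun j => ((i == j) : nat)%:Z].

Definition is_gcm (I : finType) (c : I -> I -> int) : Prop :=
  (forall i, c i i = 2) /\
  (forall j k, j != k -> c j k <= 0) /\
  (forall i j, c i j = 0 -> c j i = 0).

Definition is_cartan_scheme (I : finType) (A : Type)
    (rho : I -> A -> A) (C : A -> I -> I -> int) : Prop :=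
  inhabited A /\
  (forall a, is_gcm (C a)) /\
  (forall i a, rho i (rho i a) = a) /\
  (forall a i j, C a i j = C (rho i a) i j).

(* connected: the group generated by the rho_i acts transitively on A
   (since the rho_i are involutions, group elements are words in the rho_i) *)
Definition cs_connected (I : finType) (A : Type) (rho : I -> A -> A) : Prop :=
  forall a b : A, exists s : seq I, foldr (fun i x => rho i x) a s = b.

(* sigma_i^a (alpha_j) = alpha_j - c^a_ij alpha_i, extended linearly *)
Definition sigma (I : finType) (A : Type) (C : A -> I -> I -> int)
    (i : I) (a : A) (v : zvec I) : zvec I :=
  [ffun j => v j - (if j == i then \sum_k C a i k * v k else 0)].

Definition nonneg_vec (I : finType) (v : zvec I) : Prop := forall i, 0 <= v i.

Definition in_cone2 (I : finType) (i j : I) (v : zvec I) : Prop :=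
  exists p q : nat, v = alpha i *+ p + alpha j *+ q.

Definition has_card (I : finType) (P : zvec I -> Prop) (n : nat) : Prop :=
  exists s : seq (zvec I), uniq s /\ size s = n /\ (forall v, P v <-> v \in s).

Definition is_root_system (I : finType) (A : Type)
    (rho : I -> A -> A) (C : A -> I -> I -> int)
    (R : A -> zvec I -> Prop) : Prop :=
  (forall a v, R a v <-> ((R a v /\ nonneg_vec v) \/ (R a (- v) /\ nonneg_vec (- v)))) /\
  (forall a i v, (R a v /\ exists k : int, v = alpha i *~ k) <->
                 (v = alpha i \/ v = - alpha i)) /\
  (forall a i w, R (rho i a) w <-> exists v, R a v /\ sigma C i a v = w) /\
  (forall a i j, i != j -> forall n : nat,
       has_card (fun v => R a v /\ in_cone2 i j v) n ->
       iter n (fun b => rho i (rho j b)) a = a).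

Definition root_system_finite (I : finType) (A : Type) (R : A -> zvec I -> Prop) : Prop :=
  forall a, exists s : seq (zvec I), forall v, R a v <-> v \in s.

(* v in sum_{i in J} Z alpha_i *)
Definition supported_in (I : finType) (J : {set I}) (v : zvec I) : Prop :=
  forall i, i \notin J -> v i = 0.

Definition Rhat (I : finType) (A : Type) (R : A -> zvec I -> Prop) (J : {set I})
    (a : A) (v : zvec I) : Prop :=
  (R a v /\ supported_in J v) \/ (R a v /\ supported_in (~: J) v).

(* Main.v *)
Require Import Defs.
From mathcomp Require Import all_boot all_order all_algebra zify ring.
From Stdlib Require Import Classical FunctionalExtensionality PropExtensionality.
Import Order.TTheory GRing.Theory Num.Theory.
Set Implicit Arguments. Unset Strict Implicit. Unset Printing Implicit Defensive.
Local Open Scope ring_scope.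


Lemma alphaE (I : finType) (i j : I) : alpha i j = ((i == j) : nat)%:Z.
Proof. by rewrite ffunE. Qed.

Lemma sum_alpha (I : finType) (f : I -> int) (j : I) :
  \sum_k f k * alpha j k = f j.
Proof.
rewrite (bigD1 j) //= big1 ?addr0; first by rewrite alphaE eqxx mulr1.
by move=> k /negPf nk; rewrite alphaE eq_sym nk mulr0.
Qed.

Lemma sigmaE (I : finType) (A : Type) (C : A -> I -> I -> int) i a v j :
  sigma C i a v j = v j - (if j == i then \sum_k C a i k * v k else 0).
Proof. by rewrite ffunE. Qed.

Lemma sigma_ne (I : finType) (A : Type) (C : A -> I -> I -> int) i a v j :
  j != i -> sigma C i a v j = v j.
Proof. by move=> /negPf h; rewrite sigmaE h subr0. Qed.

Lemma sigma_alpha_i (I : finType) (A : Type) (C : A -> I -> I -> int) i a j :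
  sigma C i a (alpha j) i = alpha j i - C a i j.
Proof. by rewrite sigmaE eqxx sum_alpha. Qed.

Lemma sigma_alpha_out (I : finType) (A : Type) (C : A -> I -> I -> int) i a j :
  C a i j = 0 -> sigma C i a (alpha j) = alpha j.
Proof.
move=> h; apply/ffunP => l; rewrite sigmaE sum_alpha h.
by case: ifP; rewrite subr0.
Qed.

Lemma sigma_add (I : finType) (A : Type) (C : A -> I -> I -> int) i a x y :
  sigma C i a (x + y) = sigma C i a x + sigma C i a y.
Proof.
apply/ffunP => l; rewrite !ffunE.
have -> : \sum_k C a i k * (x + y) k = \sum_k C a i k * x k + \sum_k C a i k * y k.
  by rewrite -big_split /=; apply: eq_bigr => k _; rewrite ffunE mulrDr.
case: ifP => _; ring.
Qed.

Lemma sigma_opp (I : finType) (A : Type) (C : A -> I -> I -> int) i a x :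
  sigma C i a (- x) = - sigma C i a x.
Proof.
apply/ffunP => l; rewrite !ffunE.
have -> : \sum_k C a i k * (- x) k = - \sum_k C a i k * x k.
  by rewrite -sumrN; apply: eq_bigr => k _; rewrite ffunE mulrN.
case: ifP => _; ring.
Qed.

Lemma sigma0 (I : finType) (A : Type) (C : A -> I -> I -> int) i a :
  sigma C i a 0 = 0.
Proof.
by apply: (@addrI _ (sigma C i a 0)); rewrite -sigma_add !addr0.
Qed.

Lemma sigma_invol (I : finType) (A : Type) (C : A -> I -> I -> int) i a b v :
  C a i i = 2 -> (forall k, C b i k = C a i k) ->
  sigma C i b (sigma C i a v) = v.
Proof.
move=> h2 hb; apply/ffunP => j; rewrite sigmaE.
case: eqP => [->|/eqP ne]; last by rewrite sigma_ne // subr0.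
have E : forall S, \sum_k C a i k * (if k == i then S else 0) = 2 * S.
  move=> S; rewrite (bigD1 i) //= big1 ?addr0 ?eqxx ?h2 //.
  by move=> k /negPf ->; rewrite mulr0.
rewrite (eq_bigr (fun k => C a i k * v k - C a i k * (if k == i then \sum_k C a i k * v k else 0))); last first.
  by move=> k _; rewrite hb sigmaE mulrBr.
rewrite sumrB E sigmaE eqxx; ring.
Qed.


Lemma sum_ite (I : finType) (f : I -> int) (j : I) d :
  \sum_l f l * (if l == j then d else 0) = f j * d.
Proof.
rewrite (bigD1 j) //= big1 ?addr0 ?eqxx //.
by move=> k /negPf ->; rewrite mulr0.
Qed.


Lemma root_sign (I : finType) (A : Type) (rho : I -> A -> A) C R a v :
  @is_root_system I A rho C R -> R a v ->
  (forall l, 0 <= v l) \/ (forall l, v l <= 0).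
Proof.
case=> [R1 _] /(R1 a v) [[_ h]|[_ h]]; [left|right] => // l.
by have := h l; rewrite ffunE oppr_ge0.
Qed.

Lemma root_neg (I : finType) (A : Type) (rho : I -> A -> A) C R a v :
  @is_root_system I A rho C R -> R a v -> R a (- v).
Proof.
case=> [R1 _] hv; have := hv; move/(R1 a v) => [[_ h]|[h _]] //.
by apply/R1; right; rewrite opprK.
Qed.

Lemma root_alpha (I : finType) (A : Type) (rho : I -> A -> A) C R a i :
  @is_root_system I A rho C R -> R a (alpha i).
Proof.
by case=> [_ [R2 _]]; have [_ /(_ (or_introl erefl)) [] ] := R2 a i (alpha i).
Qed.

Lemma R3f (I : finType) (A : Type) (rho : I -> A -> A) C R a i v :
  @is_root_system I A rho C R -> R a v -> R (rho i a) (sigma C i a v).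
Proof. by case=> [_ [_ [R3 _]]] hv; apply/R3; exists v. Qed.

Lemma R3b (I : finType) (A : Type) (rho : I -> A -> A) C R a i w :
  @is_root_system I A rho C R -> R (rho i a) w -> exists v, R a v /\ sigma C i a v = w.
Proof. by case=> [_ [_ [R3 _]]] /R3. Qed.

Definition sep (I : finType) (A : Type) (C : A -> I -> I -> int) (J : {set I}) a :=
  forall i l, i \in J -> l \notin J -> C a i l = 0 /\ C a l i = 0.

Lemma sepC (I : finType) (A : Type) (C : A -> I -> I -> int) J a :
  sep C J a -> sep C (~: J) a.
Proof.
move=> h i l; rewrite !in_setC negbK => iJ lJ.
by have [? ?] := h l i lJ iJ.
Qed.

Lemma step_sep (I : finType) (A : Type) (rho : I -> A -> A) C R J a k :
  is_cartan_scheme rho C -> @is_root_system I A rho C R ->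
  sep C J a -> k \in J -> sep C J (rho k a).
Proof.
move=> [_ [gcm [inv C2]]] hRS hs kJ i j iJ jN.
set b := rho k a.
suff cji : C b j i = 0.
  by split=> //; have [_ [_ g3]] := gcm b; apply: g3.
have [//|nz] := eqVneq (C b j i) 0; exfalso.
have ij : i != j by apply/eqP => e; rewrite -e iJ in jN.
have jk : j != k by apply/eqP => e; rewrite e kJ in jN.
set v := sigma C j (rho j b) (alpha i).
have Rv : R b v by have := R3f j hRS (root_alpha (rho j b) i hRS); rewrite inv.
have vE : forall l, v l = alpha i l - (if l == j then C b j i else 0).
  by move=> l; rewrite sigmaE sum_alpha -C2.
set w := sigma C k b v.
have Rw : R a w by have := R3f k hRS Rv; rewrite /b inv.
have wj : w j = - C b j i.
  by rewrite sigma_ne // vE eqxx alphaE (negPf ij) sub0r.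
have wl : forall l, l != k -> w l = v l by move=> l; apply: sigma_ne.
have wi : w i != 0.
  have [ik|ik] := eqVneq i k; last first.
    by rewrite wl // vE alphaE eqxx (negPf ij) subr0.
  rewrite sigmaE ik eqxx.
  have -> : \sum_l C b k l * v l = C b k k - C b k j * C b j i.
    rewrite (eq_bigr (fun l => C b k l * alpha i l - C b k l * (if l == j then C b j i else 0))).
      by rewrite sumrB sum_alpha sum_ite ik.
    by move=> l _; rewrite vE mulrBr.
  have [g1 _] := gcm b.
  have -> : C b k j = 0 by rewrite /b -C2; have [] := hs k j kJ jN.
  rewrite -ik vE alphaE eqxx (negPf (ij)) g1. lia.
set u := sigma C j a w.
have Ru : R (rho j a) u := R3f j hRS Rw.
have ui : u i = w i by apply: sigma_ne.
have uj : u j = - w j.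
  rewrite sigmaE eqxx.
  have -> : \sum_l C a j l * w l = C a j j * w j.
    rewrite (bigD1 j) //= big1 ?addr0 // => l lj.
    case: (boolP (l \in J)) => lJ; first by have [_ ->] := hs l j lJ jN; rewrite mul0r.
    have lk : l != k by apply/eqP => e; rewrite e kJ in lJ.
    have li : i != l by apply/eqP => e; rewrite -e iJ in lJ.
    by rewrite wl // vE (negPf lj) alphaE (negPf li) subr0 mulr0.
  have [g1 _] := gcm a; rewrite g1; ring.
have wj0 : w j != 0 by rewrite wj oppr_eq0.
case: (root_sign hRS Rw) => hw; case: (root_sign hRS Ru) => hu.
- by have := hw j; have := hu j; rewrite uj; move: wj0; lia.
- by have := hw i; have := hu i; rewrite ui; move: wi; lia.
- by have := hw i; have := hu i; rewrite ui; move: wi; lia.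
- by have := hw j; have := hu j; rewrite uj; move: wj0; lia.
Qed.


Lemma sep_all (I : finType) (A : Type) (rho : I -> A -> A) C R J a0 :
  is_cartan_scheme rho C -> @is_root_system I A rho C R -> cs_connected rho ->
  sep C J a0 -> forall b, sep C J b.
Proof.
move=> hCS hRS conn h0 b; have [s <-] := conn a0 b.
elim: s => //= k s IH; case: (boolP (k \in J)) => kJ; first exact: (step_sep hCS hRS IH kJ).
have kJ' : k \in ~: J by rewrite in_setC.
have := sepC (step_sep hCS hRS (sepC IH) kJ'); by rewrite setCK.
Qed.

Lemma supp_opp (I : finType) (J : {set I}) v :
  supported_in J (- v) <-> supported_in J v.
Proof.
split=> h m mJ; have := h m mJ; rewrite ?ffunE //.
  by move/eqP; rewrite oppr_eq0 => /eqP.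
by move=> ->; rewrite oppr0.
Qed.

Lemma supp_comb (I : finType) (J : {set I}) i j (p q : nat) :
  (p = 0%N \/ i \in J) -> (q = 0%N \/ j \in J) ->
  supported_in J (alpha i *+ p + alpha j *+ q).
Proof.
move=> hp hq m mJ; rewrite !ffunE !ffunMnE.
have -> : alpha i m *+ p = 0.
  case: hp => [->|iJ]; first by rewrite mulr0n.
  by rewrite alphaE; case: eqP => [e|]; [by rewrite e (negPf mJ) in iJ|rewrite mul0rn].
have -> : alpha j m *+ q = 0.
  case: hq => [->|iJ]; first by rewrite mulr0n.
  by rewrite alphaE; case: eqP => [e|]; [by rewrite e (negPf mJ) in iJ|rewrite mul0rn].
by rewrite addr0.
Qed.

Lemma supp_alpha (I : finType) (J : {set I}) i :
  i \in J -> supported_in J (alpha i).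
Proof.
move=> iJ; have := supp_comb (j := i) (p := 1%N) (q := 0%N) (or_intror iJ) (or_introl erefl).
by rewrite mulr0n addr0 mulr1n.
Qed.

Lemma sigma_supp (I : finType) (A : Type) (C : A -> I -> I -> int) J a i v :
  sep C J a -> supported_in J v -> supported_in J (sigma C i a v).
Proof.
move=> hs hv m mJ; rewrite sigmaE hv //; case: eqP => [e|_]; last by rewrite subr0.
rewrite big1 ?subr0 // => l _.
case: (boolP (l \in J)) => lJ; last by rewrite hv // mulr0.
by rewrite -e; have [_ ->] := hs l m lJ mJ; rewrite mul0r.
Qed.

Lemma cross (I : finType) (A : Type) (rho : I -> A -> A) C R a i j v (p q : nat) :
  is_cartan_scheme rho C -> @is_root_system I A rho C R ->
  i != j -> C a i j = 0 -> R a v -> v = alpha i *+ p + alpha j *+ q ->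
  p = 0%N \/ q = 0%N.
Proof.
move=> [_ [gcm _]] hRS ij cij Rv ve.
case: (eqVneq p 0%N) => [|p0]; first by left.
case: (eqVneq q 0%N) => [|q0]; first by right.
exfalso.
have vE : forall l, v l = alpha i l * p%:R + alpha j l * q%:R.
  by move=> l; rewrite ve !ffunE !ffunMnE !alphaE; ring.
have Rw := R3f i hRS Rv.
set w := sigma C i a v in Rw.
have wi : w i = - p%:R.
  rewrite sigmaE eqxx.
  rewrite (eq_bigr (fun l => (C a i l * p%:R) * alpha i l + (C a i l * q%:R) * alpha j l)); last first.
    by move=> l _; rewrite vE mulrDr !mulrA; congr (_ + _); ring.
  rewrite big_split /= !sum_alpha cij vE !alphaE eqxx eq_sym (negPf ij).
  have [g1 _] := gcm a; rewrite g1; lia.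
have wj : w j = q%:R.
  by rewrite sigma_ne 1?eq_sym // vE !alphaE (negPf ij) eqxx; lia.
case: (root_sign hRS Rw) => h; [have := h i|have := h j]; rewrite ?wi ?wj; lia.
Qed.

Lemma cone_supp (I : finType) (A : Type) (rho : I -> A -> A) C R J a i j v :
  is_cartan_scheme rho C -> @is_root_system I A rho C R -> sep C J a ->
  i != j -> R a v -> in_cone2 i j v ->
  supported_in J v \/ supported_in (~: J) v.
Proof.
move=> hCS hRS hs ij Rv [p [q ve]].
have iJc : forall x, (x \in ~: J) = (x \notin J) by move=> x; rewrite in_setC.
case: (boolP (i \in J)) => iJ; case: (boolP (j \in J)) => jJ.
- by left; rewrite ve; apply: supp_comb; right.
- have [cij _] := hs i j iJ jJ.
  case: (cross hCS hRS ij cij Rv ve) => e.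
  + by right; rewrite ve; apply: supp_comb; [left|right; rewrite iJc].
  + by left; rewrite ve; apply: supp_comb; [right|left].
- have [cji _] := hs j i jJ iJ.
  have ve' : v = alpha j *+ q + alpha i *+ p by rewrite ve addrC.
  have ji : j != i by rewrite eq_sym.
  case: (cross hCS hRS (ji : j != i) cji Rv ve') => e.
  + by right; rewrite ve; apply: supp_comb; [right; rewrite iJc|left].
  + by left; rewrite ve; apply: supp_comb; [left|right].
- by right; rewrite ve; apply: supp_comb; right; rewrite iJc.
Qed.


Lemma RhatE (I : finType) (A : Type) (R : A -> zvec I -> Prop) J a v :
  Rhat R J a v <-> R a v /\ (supported_in J v \/ supported_in (~: J) v).
Proof. by rewrite /Rhat; split; [case=> [][]|case=> ? []]; auto. Qed.

Lemma has_card_ext (I : finType) (P Q : zvec I -> Prop) n :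
  (forall v, P v <-> Q v) -> has_card P n -> has_card Q n.
Proof.
move=> h [s [us [ss hs]]]; exists s; split=> //; split=> // v.
by rewrite -hs; split; move/h.
Qed.

Lemma c2_c3 (I : finType) (A : Type) (rho : I -> A -> A) C R J :
  is_cartan_scheme rho C -> @is_root_system I A rho C R ->
  (forall a, sep C J a) -> is_root_system rho C (Rhat R J).
Proof.
move=> hCS hRS hs; have [_ [gcm [inv C2]]] := hCS.
have hRS' := hRS; case: hRS' => [R1 [R2 [R3 R4]]].
split; [|split; [|split]].
- move=> a v; split.
  + move=> /RhatE [Rv hv]; case: ((R1 a v).1 Rv) => [[_ nn]|[Rn nn]].
      by left; split=> //; apply/RhatE.
    right; split=> //; apply/RhatE; split=> //.
    by case: hv => h; [left|right]; apply/supp_opp.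
  + case=> [[//]|[/RhatE [Rn hv] nn]]; apply/RhatE; split.
      by apply/(R1 a v); right.
    by case: hv => h; [left|right]; apply/supp_opp.
- move=> a i v; split.
  + by move=> [/RhatE [Rv _] hk]; apply/(R2 a i v).
  + move=> h; have [Rv hk] := (R2 a i v).2 h; split=> //; apply/RhatE; split=> //.
    case: (boolP (i \in J)) => iJ; [left|right];
      (case: h => ->; [|apply/supp_opp]); apply: supp_alpha; rewrite ?in_setC //.
- move=> a i w; split.
  + move=> /RhatE [Rw hw]; have [v [Rv ev]] := (R3 a i w).1 Rw.
    exists v; split=> //; apply/RhatE; split=> //.
    have -> : v = sigma C i (rho i a) w.
      have [g1 _] := gcm a.
      by rewrite -ev sigma_invol // => k; rewrite -C2.
    by case: hw => h; [left|right]; apply: sigma_supp => //; apply: sepC.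
  + move=> [v [/RhatE [Rv hv] ev]]; apply/RhatE; split.
      by apply/(R3 a i w); exists v.
    by rewrite -ev; case: hv => h; [left|right]; apply: sigma_supp => //; apply: sepC.
- move=> a i j ij n hc; apply: (R4 a i j ij n); apply: has_card_ext hc => v.
  split; first by case=> /RhatE [].
  move=> [Rv hcone]; split=> //; apply/RhatE; split=> //.
  exact: (cone_supp hCS hRS (hs a) ij Rv hcone).
Qed.

Lemma c3_c2 (I : finType) (A : Type) (rho : I -> A -> A) C R J :
  is_cartan_scheme rho C -> @is_root_system I A rho C R ->
  is_root_system rho C (Rhat R J) ->
  forall a i j, i \in J -> j \in ~: J -> C a i j = 0 /\ C a j i = 0.
Proof.
move=> [_ [gcm _]] hRS hRh a i j iJ jJ.
have ij : i != j by apply: contraTneq jJ => <-; rewrite in_setC iJ.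
have Ra : Rhat R J a (alpha j).
  by apply/RhatE; split; [exact: (root_alpha a j hRS)|right; exact: supp_alpha].
have /RhatE [_ h] := R3f i hRh Ra.
suff cij : C a i j = 0 by split=> //; have [_ [_ g3]] := gcm a; apply: g3.
case: h => h.
- have := h j; rewrite -in_setC => /(_ jJ).
  by rewrite sigma_ne 1?eq_sym // alphaE eqxx.
- have := h i; rewrite in_setC negbK => /(_ iJ).
  rewrite sigma_alpha_i alphaE eq_sym (negPf ij) => /eqP.
  by rewrite sub0r oppr_eq0 => /eqP.
Qed.


Definition obj (I : finType) (A : Type) (rho : I -> A -> A) (a : A) (s : seq I) : A :=
  foldr (fun k b => rho k b) a s.

Fixpoint act (I : finType) (A : Type) (rho : I -> A -> A) (C : A -> I -> I -> int)
    (a : A) (s : seq I) (v : zvec I) : zvec I :=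
  match s with
  | [::] => v
  | k :: s' => sigma C k (obj rho a s') (act rho C a s' v)
  end.

Lemma act_root (I : finType) (A : Type) (rho : I -> A -> A) C R a s v :
  @is_root_system I A rho C R -> R a v -> R (obj rho a s) (act rho C a s v).
Proof. by move=> hRS Rv; elim: s => //= k s IH; apply: (R3f k hRS IH). Qed.

Lemma act_surj (I : finType) (A : Type) (rho : I -> A -> A) C R a s u :
  @is_root_system I A rho C R -> R (obj rho a s) u ->
  exists v, R a v /\ act rho C a s v = u.
Proof.
move=> hRS; elim: s u => [|k s IH] u /= Ru; first by exists u.
have [v' [Rv' ev']] := R3b hRS Ru.
have [v [Rv ev]] := IH v' Rv'; exists v; split=> //; by rewrite ev.
Qed.

Lemma act_add (I : finType) (A : Type) (rho : I -> A -> A) C a s x y :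
  act rho C a s (x + y) = act rho C a s x + act rho C a s y.
Proof. by elim: s => //= k s ->; rewrite sigma_add. Qed.

Lemma act_opp (I : finType) (A : Type) (rho : I -> A -> A) C a s x :
  act rho C a s (- x) = - act rho C a s x.
Proof. by elim: s => //= k s ->; rewrite sigma_opp. Qed.

Lemma act_keep (I : finType) (A : Type) (rho : I -> A -> A) C (J : {set I}) a s v m :
  all (mem J) s -> m \notin J -> act rho C a s v m = v m.
Proof.
move=> hs mJ; elim: s hs => //= k s IH /andP [kJ hs].
rewrite sigma_ne ?IH //; apply: contraNneq mJ => ->; exact: kJ.
Qed.

Lemma act_alpha_out (I : finType) (A : Type) (rho : I -> A -> A) C (J : {set I}) a s l :
  (forall b, sep C J b) -> all (mem J) s -> l \notin J ->
  act rho C a s (alpha l) = alpha l.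
Proof.
move=> hsep hs lJ; elim: s hs => //= k s IH /andP [kJ hs].
rewrite IH // sigma_alpha_out //; by have [] := hsep (obj rho a s) k l kJ lJ.
Qed.

Lemma act_inj0 (I : finType) (A : Type) (rho : I -> A -> A) C a s w :
  is_cartan_scheme rho C -> act rho C a s w = 0 -> w = 0.
Proof.
move=> [_ [gcm [inv C2]]]; elim: s => //= k s IH h; apply: IH.
set b := obj rho a s in h *.
have [g1 _] := gcm b.
rewrite -(@sigma_invol _ _ C k b (rho k b) (act rho C a s w) (g1 k) (fun t => esym (C2 b k t))).
by rewrite h sigma0.
Qed.


Lemma count_le_in (T : eqType) (P Q : pred T) (L : seq T) :
  (forall x, x \in L -> P x -> Q x) -> (count P L <= count Q L)%N.
Proof.
elim: L => //= y L IH h.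
have h' : forall x, x \in L -> P x -> Q x by move=> x xL; apply: h; rewrite in_cons xL orbT.
have := IH h'; case Py: (P y); last by move=> hl; apply: leq_add.
by rewrite (h y (mem_head _ _) Py).
Qed.

Lemma count_lt_in (T : eqType) (P Q : pred T) (L : seq T) x0 :
  (forall x, x \in L -> P x -> Q x) -> x0 \in L -> Q x0 -> ~~ P x0 ->
  (count P L < count Q L)%N.
Proof.
elim: L => //= y L IH h.
have h' : forall x, x \in L -> P x -> Q x by move=> x xL; apply: h; rewrite in_cons xL orbT.
rewrite in_cons => /orP [/eqP ->|xL] Qx nPx.
  by rewrite Qx (negPf nPx) add0n add1n ltnS count_le_in.
have := IH h' xL Qx nPx; case Py: (P y); last by move=> hl; rewrite add0n; apply: leq_trans hl (leq_addl _ _).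
by rewrite (h y (mem_head _ _) Py) !add1n ltnS.
Qed.

Lemma neg_stays (I : finType) (A : Type) (rho : I -> A -> A) C R b k y :
  @is_root_system I A rho C R -> R b y -> (forall t, y t <= 0) -> y <> - alpha k ->
  forall t, sigma C k b y t <= 0.
Proof.
move=> hRS Ry yn ynk.
case: (classic (exists t, t != k /\ y t != 0)) => [[t [tk yt]]|none].
  have Rs := R3f k hRS Ry.
  case: (root_sign hRS Rs) => // h; exfalso.
  have := h t; rewrite sigma_ne //; have := yn t; move: yt; lia.
exfalso.
have ye : y = alpha k *~ (y k).
  apply/ffunP => t; rewrite ffunMzE alphaE.
  case: (eqVneq k t) => [->|kt]; first lia.
  have : y t = 0 by apply/eqP; apply: contraT => h; case: none; exists t; rewrite eq_sym.
  lia.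
case: hRS => [_ [R2 _]].
case: ((R2 b k y).1 (conj Ry (ex_intro _ _ ye))) => e //.
by have := yn k; rewrite e alphaE eqxx.
Qed.

Lemma stepA (I : finType) (A : Type) (rho : I -> A -> A) C R (J : {set I}) a :
  is_cartan_scheme rho C -> @is_root_system I A rho C R ->
  (exists L : seq (zvec I), forall v, R a v <-> v \in L) ->
  exists s, all (mem J) s /\
    forall k b, k \in J -> R a b -> act rho C a s b = alpha k -> forall t, b t <= 0.
Proof.
move=> hCS hRS [L hL].
pose ng s := fun x : zvec I => [forall t, 0 <= x t] && [forall t, act rho C a s x t <= 0].
have key : forall s k b t, k \in J -> R a b -> act rho C a s b = alpha k -> 0 < b t ->
    (count (ng s) L < count (ng (k :: s)) L)%N.
  move=> s k b t kJ Rb eb bt.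
  apply: (@count_lt_in _ _ _ _ b).
  - move=> x xL /andP [/forallP xp /forallP xn]; apply/andP; split; first exact/forallP.
    apply/forallP => t' /=.
    have Rx : R a x by apply/hL.
    apply: (neg_stays hRS (act_root s hRS Rx)) => // e.
    have : act rho C a s (x + b) = 0 by rewrite act_add e eb addNr.
    move/(act_inj0 hCS)/ffunP/(_ t); rewrite !ffunE.
    move/eqP; rewrite addr_eq0 => /eqP e2; have := xp t; rewrite e2 oppr_ge0 => h; by rewrite leNgt bt in h.
  - by apply/hL.
  - apply/andP; split.
      apply/forallP => t'; case: (root_sign hRS Rb) => // h.
      by have := h t; move: bt; lia.
    apply/forallP => t' /=. rewrite eb.
    case: (eqVneq t' k) => [->|tk].
      rewrite sigma_alpha_i alphaE eqxx.
      by have [_ [gcm _]] := hCS; have [g1 _] := gcm (obj rho a s); rewrite g1.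
    by rewrite sigma_ne // alphaE eq_sym (negPf tk).
  - rewrite negb_and; apply/orP; right; apply/negP => /forallP h.
    by have := h k; rewrite eb alphaE eqxx.
suff : forall n s, all (mem J) s -> (size L - count (ng s) L <= n)%N ->
    exists s, all (mem J) s /\
    forall k b, k \in J -> R a b -> act rho C a s b = alpha k -> forall t, b t <= 0.
  by move/(_ (size L) [::]); apply => //; rewrite leq_subr.
elim=> [|n IH] s hs hn;
  (case: (classic (exists k b t, [/\ k \in J, R a b, act rho C a s b = alpha k & 0 < b t]))
    => [[k [b [t [kJ Rb eb bt]]]]|none]); last first.
- exists s; split=> // k b kJ Rb eb t; rewrite leNgt; apply/negP => bt.
  by apply: none; exists k, b, t.
- have := key s k b t kJ Rb eb bt; have := count_size (ng (k :: s)) L.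
  move=> h1 h2; apply: (IH (k :: s)); first by rewrite /= kJ.
  move: hn h1 h2; lia.
- exists s; split=> // k b kJ Rb eb t; rewrite leNgt; apply/negP => bt.
  by apply: none; exists k, b, t.
- have := key s k b t kJ Rb eb bt; have := count_size (ng (k :: s)) L.
  move: hn; lia.
Qed.


Lemma stepB (I : finType) (A : Type) (rho : I -> A -> A) C R (J : {set I}) a s :
  is_cartan_scheme rho C -> @is_root_system I A rho C R ->
  (forall b, sep C J b) -> all (mem J) s ->
  (forall k b, k \in J -> R a b -> act rho C a s b = alpha k -> forall t, b t <= 0) ->
  forall (n : nat) (z : zvec I), \sum_t z t <= n%:R -> (forall t, 0 <= z t) ->
  forall w, act rho C a s w = z -> forall t, t \in J -> w t <= 0.
Proof.
move=> hCS hRS hsep hs hneg.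
have zero : forall w, act rho C a s w = 0 -> forall t, w t <= 0.
  by move=> w /(act_inj0 hCS) -> t; rewrite ffunE.
have ge : forall z : zvec I, (forall t, 0 <= z t) -> forall t, z t <= \sum_t z t.
  by move=> z hz t; rewrite (bigD1 t) //= lerDl sumr_ge0.
elim=> [|n IH] z hsum hz w hw t tJ.
  have z0 : z = 0.
    apply/ffunP => t'; rewrite ffunE; apply/eqP; rewrite eq_le hz andbT.
    exact: le_trans (ge z hz t') hsum.
  by rewrite z0 in hw; apply: zero.
case: (classic (exists l, z l != 0)) => [[l zl]|none]; last first.
  have z0 : z = 0.
    apply/ffunP => t'; rewrite ffunE; apply/eqP; apply: contraT => h.
    by case: none; exists t'.
  by rewrite z0 in hw; apply: zero.
have [b [eb bJ]] : exists b, act rho C a s b = alpha l /\ forall t, t \in J -> b t <= 0.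
  case: (boolP (l \in J)) => lJ.
    have [b [Rb eb]] := act_surj hRS (root_alpha (obj rho a s) l hRS).
    by exists b; split=> // t' _; exact: hneg lJ Rb eb t'.
  exists (alpha l); split; first exact: act_alpha_out.
  move=> t' t'J; have lt : l != t' by apply: contraNneq lJ => ->.
  by rewrite alphaE (negPf lt).
have zl1 : 1 <= z l by have := hz l; move: zl; lia.
set z' := z - alpha l.
have hz' : forall t, 0 <= z' t.
  move=> t'; rewrite /z' !ffunE; case: eqP => [<-|_]; move: (hz t') zl1 => /=; lia.
have hsum' : \sum_t z' t <= n%:R.
  have -> : \sum_t z' t = \sum_t z t - 1.
    rewrite /z' (eq_bigr (fun t => z t - 1 * alpha l t)); last by move=> t' _; rewrite !ffunE mul1r.
    by rewrite sumrB sum_alpha.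
  by rewrite lerBlDr natr1.
have hw' : act rho C a s (w - b) = z' by rewrite act_add act_opp hw eb.
have := IH z' hsum' hz' (w - b) hw' t tJ; rewrite !ffunE.
have := bJ t tJ; move: (w t) (b t) => x y; lia.
Qed.

Lemma no_mixed (I : finType) (A : Type) (rho : I -> A -> A) C R (J : {set I}) :
  is_cartan_scheme rho C -> @is_root_system I A rho C R ->
  (forall b, sep C J b) -> root_system_finite R ->
  forall a v, R a v -> supported_in J v \/ supported_in (~: J) v.
Proof.
move=> hCS hRS hsep fin.
suff pos : forall a v, R a v -> (forall t, 0 <= v t) ->
    supported_in J v \/ supported_in (~: J) v.
  move=> a v Rv; case: (root_sign hRS Rv) => h; first exact: (pos a v Rv h).
  have hn : forall t, 0 <= (- v) t by move=> t; rewrite ffunE oppr_ge0.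
  by case: (pos a (- v) (root_neg hRS Rv) hn) => h'; [left|right]; exact: (supp_opp _ v).1 h'.
move=> a v Rv vp.
case: (classic (supported_in J v)) => hJ; first by left.
have [m [mJ vm]] : exists m, m \notin J /\ v m != 0.
  apply: NNPP => h; apply: hJ => m mJ; apply/eqP; apply: contraT => vm.
  by case: h; exists m.
right.
have [s [hs hneg]] := stepA J hCS hRS (fin a).
have Ru := act_root s hRS Rv.
set u := act rho C a s v in Ru.
have um : u m = v m by rewrite /u (act_keep _ _ _ _ hs mJ).
have up : forall t, 0 <= u t.
  case: (root_sign hRS Ru) => // h; exfalso.
  by have := h m; have := vp m; rewrite um; move: vm; lia.
have [n hn] : exists n : nat, \sum_t u t <= n%:R.
  by case: (\sum_t u t) => n; [exists n; rewrite natz|exists 0%N].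
have hJ0 := stepB hCS hRS hsep hs hneg hn up (erefl u).
move=> t; rewrite in_setC negbK => tJ; apply/eqP; rewrite eq_le vp andbT.
exact: hJ0.
Qed.

Unset Implicit Arguments. Set Strict Implicit.

Theorem proposition4p6 (I : finType) (A : Type)
    (rho : I -> A -> A) (C : A -> I -> I -> int) (R : A -> zvec I -> Prop)
    (I' : {set I}) :
  is_cartan_scheme rho C -> cs_connected rho ->
  is_root_system rho C R ->
  I' != set0 -> ~: I' != set0 ->
  let c1 := exists a : A, forall i j, i \in I' -> j \in ~: I' -> C a i j = 0 in
  let c2 := forall a i j, i \in I' -> j \in ~: I' -> C a i j = 0 /\ C a j i = 0 in
  let c3 := is_root_system rho C (Rhat R I') in
  let c4 := forall a v, Rhat R I' a v <-> R a v in
  let c5 := forall a v, R a v <->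
              ((R a v /\ supported_in I' v) \/ (R a v /\ supported_in (~: I') v)) in
  (c1 <-> c2) /\ (c2 <-> c3) /\
  (root_system_finite R -> (c3 <-> c4) /\ (c3 <-> c5)).
Proof.
move=> hCS conn hRS _ _ c1 c2 c3 c4 c5.
have sepc2 : c2 -> forall b, sep C I' b.
  by move=> h b i j iJ jN; apply: h; rewrite ?in_setC.
have h12 : c1 -> c2.
  move=> [a0 h].
  have s0 : sep C I' a0.
    move=> i j iJ jN; have cij : C a0 i j = 0 by apply: h; rewrite ?in_setC.
    by split=> //; have [_ [gcm _]] := hCS; have [_ [_ g3]] := gcm a0; apply: g3.
  have hall := sep_all hCS hRS conn s0.
  by move=> a i j iJ jN; apply: hall; rewrite -?in_setC.
have h21 : c2 -> c1.
  by case: hCS => [[a0] _] h; exists a0 => i j iJ jN; exact: (h a0 i j iJ jN).1.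
have h23 : c2 -> c3 by move=> h; exact: (c2_c3 hCS hRS (sepc2 h)).
have h32 : c3 -> c2 by move=> h; exact: (c3_c2 hCS hRS h).
split; first by split.
split; first by split.
move=> fin.
have h34 : c3 -> c4.
  move=> h3 a v; split; first by case/RhatE.
  move=> Rv; apply/RhatE; split=> //.
  exact: (no_mixed hCS hRS (sepc2 (h32 h3)) fin Rv).
have h43 : c4 -> c3.
  move=> h4; rewrite /c3.
  have -> : Rhat R I' = R.
    apply: functional_extensionality => a; apply: functional_extensionality => v.
    by apply: propositional_extensionality; exact: h4.
  exact: hRS.
have h45 : c4 <-> c5.
  by split=> h a v; have [e1 e2] := h a v; split.
split; split.
- exact: h34.
- exact: h43.
- by move/h34/h45.
- by move/h45/h43.
Qed.
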